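(* For every natural number $k$, the set $\mathbb{R}^+$ of positive real numbers can be written as the union of $k$ pairwise disjoint nonempty subsets, each of which is closed under addition and multiplication. *)

(* Defs.v *)
From Stdlib Require Import Reals.
Open Scope R_scope.

Definition add_mul_closed (S : R -> Prop) : Prop :=
  forall x y : R, S x -> S y -> S (x + y) /\ S (x * y).

Definition semiring_partition_of_pos (k : nat) (A : nat -> R -> Prop) : Prop :=
  (forall i, (i < k)%nat -> exists x, A i x) /\
  (forall i j x, (i < k)%nat -> (j < k)%nat -> A i x -> A j x -> i = j) /\
  (forall x, 0 < x <-> exists i, (i < k)%nat /\ A i x) /\
  (forall i, (i < k)%nat -> add_mul_closed (A i)).

(* Main.v *)
Require Import Defs.
From Stdlib Require Import Reals ClassicalEpsilon.
From mathcomp Require Import all_boot all_algebra.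
From mathcomp Require Import Rstruct boolp classical_sets reals.
From mathcomp Require Import ring zify lra.
Import GRing.Theory Num.Theory.
Import order.Order.TTheory.

(* Proof idea: build k-1 derivations D_0..D_{k-2} of R (via Zorn's lemma,
   extending from Z[t_0,...,t_{k-2}] with t_l transcendental over the previous
   ones), with D_j(t_l) = -t_l if j = l, 0 otherwise.  Classes: for i < k-1,
   the x > 0 whose vector (D_j x)_j is lexicographically negative with first
   nonzero entry at i; class k-1: the x > 0 with lex-nonnegative vector. *)

Set Implicit Arguments.
Unset Strict Implicit.
Unset Printing Implicit Defensive.
Bind Scope ring_scope with R.



Section Der.
Local Open Scope ring_scope.

Definition graphR := set (R * R).

Record Pder (G : graphR) : Prop := {
  pd_fun : forall x y z, G (x, y) -> G (x, z) -> y = z;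
  pd_one : G (1%R, 0%R);
  pd_add : forall x a y b, G (x, a) -> G (y, b) -> G ((x + y)%R, (a + b)%R);
  pd_opp : forall x a, G (x, a) -> G ((- x)%R, (- a)%R);
  pd_mul : forall x a y b, G (x, a) -> G (y, b) -> G ((x * y)%R, (x * b + y * a)%R) }.

Definition dom (G : graphR) (x : R) := exists y, G (x, y).
Definition Df (G : graphR) (x : R) : R := epsilon (inhabits 0) (fun y => G (x, y)).

Lemma DfP G x : dom G x -> G (x, Df G x).
Proof. by move=> h; apply: (epsilon_spec (inhabits 0) (fun y => G (x, y))). Qed.

Definition over (S : R -> Prop) (p : {poly R}) := forall i, S p`_i.

Variable G : graphR.
Hypothesis HG : Pder G.
Local Notation S := (dom G).
Local Notation D := (Df G).

Lemma G00 : G (0, 0).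
Proof.
have h := pd_add HG (pd_one HG) (pd_opp HG (pd_one HG)).
by rewrite subrr oppr0 addr0 in h.
Qed.

Lemma DG x : S x -> G (x, D x).
Proof. exact: DfP. Qed.

Lemma S0 : S 0. Proof. by exists 0; exact: G00. Qed.
Lemma S1 : S 1. Proof. by exists 0; exact: (pd_one HG). Qed.
Lemma SD x y : S x -> S y -> S (x + y).
Proof. by move=> [a ha] [b hb]; exists (a + b); exact: pd_add. Qed.
Lemma SN x : S x -> S (- x).
Proof. by move=> [a ha]; exists (- a); exact: pd_opp. Qed.
Lemma SM x y : S x -> S y -> S (x * y).
Proof. by move=> [a ha] [b hb]; eexists; exact: pd_mul ha hb. Qed.
Lemma SB x y : S x -> S y -> S (x - y).
Proof. by move=> hx hy; apply: SD => //; exact: SN. Qed.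
Lemma SMn x n : S x -> S (x *+ n).
Proof. move=> hx; elim: n => [|n IH].
- rewrite mulr0n; exact: S0.
- rewrite mulrS; exact: SD. Qed.
Lemma Snat n : S n%:R.
Proof. exact: SMn S1. Qed.

Lemma Dval x y : G (x, y) -> D x = y.
Proof. move=> h; apply: (pd_fun HG _ h); apply: DG; by exists y. Qed.

Lemma D0 : D 0 = 0. Proof. exact: Dval G00. Qed.
Lemma D1 : D 1 = 0. Proof. exact: Dval (pd_one HG). Qed.
Lemma DD x y : S x -> S y -> D (x + y) = D x + D y.
Proof. by move=> hx hy; apply: Dval; exact (pd_add HG (DG hx) (DG hy)). Qed.
Lemma DN x : S x -> D (- x) = - D x.
Proof. by move=> hx; apply: Dval; exact (pd_opp HG (DG hx)). Qed.
Lemma DM x y : S x -> S y -> D (x * y) = x * D y + y * D x.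
Proof. by move=> hx hy; apply: Dval; exact (pd_mul HG (DG hx) (DG hy)). Qed.

Lemma Dsum n (F : nat -> R) : (forall i, (i < n)%N -> S (F i)) ->
  S (\sum_(i < n) F i) /\ D (\sum_(i < n) F i) = \sum_(i < n) D (F i).
Proof.
elim: n => [|n IH] h.
  by rewrite !big_ord0; split; [exact: S0 | exact: D0].
have [h1 h2] : S (\sum_(i < n) F i) /\ D (\sum_(i < n) F i) = \sum_(i < n) D (F i).
  by apply: IH => i hi; apply: h; apply: ltnW.
have hn : S (F n) by apply: h.
rewrite !big_ord_recr /=; split; first exact: SD.
by rewrite DD // h2.
Qed.

Definition pD (p : {poly R}) := map_poly D p.

Lemma coef_pD p i : (pD p)`_i = D p`_i.
Proof. by rewrite coef_map_id0 // D0. Qed.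

Lemma overD p q : over S p -> over S q -> over S (p + q).
Proof. by move=> hp hq i; rewrite coefD; apply: SD. Qed.
Lemma overN p : over S p -> over S (- p).
Proof. by move=> hp i; rewrite coefN; apply: SN. Qed.
Lemma overB p q : over S p -> over S q -> over S (p - q).
Proof. by move=> hp hq; apply: overD => //; exact: overN. Qed.
Lemma overM p q : over S p -> over S q -> over S (p * q).
Proof.
move=> hp hq i; rewrite coefM.
have [h _] := Dsum (n := i.+1) (F := fun j => p`_j * q`_(i - j)%N) (fun j _ => SM (hp j) (hq (i - j)%N)).
exact: h.
Qed.
Lemma overC c : S c -> over S c%:P.
Proof. by move=> hc i; rewrite coefC; case: (i == 0%N) => //; exact: S0. Qed.
Lemma overX : over S 'X.
Proof. by move=> i; rewrite coefX; case: (i == 1%N); [exact: S1 | exact: S0]. Qed.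
Lemma overXn n : over S 'X^n.
Proof. by move=> i; rewrite coefXn; case: (i == n); [exact: S1 | exact: S0]. Qed.
Lemma over_deriv p : over S p -> over S p^`().
Proof. by move=> hp i; rewrite coef_deriv; apply: SMn. Qed.
Lemma over0 : over S 0.
Proof. by move=> i; rewrite coef0; exact: S0. Qed.

Lemma pDD p q : over S p -> over S q -> pD (p + q) = pD p + pD q.
Proof. by move=> hp hq; apply/polyP => i; rewrite coefD !coef_pD coefD DD. Qed.
Lemma pDN p : over S p -> pD (- p) = - pD p.
Proof. by move=> hp; apply/polyP => i; rewrite coefN !coef_pD coefN DN. Qed.
Lemma pDB p q : over S p -> over S q -> pD (p - q) = pD p - pD q.
Proof. by move=> hp hq; rewrite pDD ?pDN //; exact: overN. Qed.
Lemma pDC c : S c -> pD c%:P = (D c)%:P.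
Proof.
move=> hc; apply/polyP => i; rewrite coef_pD !coefC.
by case: (i == 0%N) => //; rewrite D0.
Qed.
Lemma pD0 : pD 0 = 0.
Proof. by rewrite /pD map_poly0. Qed.
Lemma pDX : pD 'X = 0.
Proof.
apply/polyP => i; rewrite coef_pD coefX coef0.
by case: (i == 1%N); [exact: D1 | exact: D0].
Qed.

Lemma pDM p q : over S p -> over S q -> pD (p * q) = pD p * q + p * pD q.
Proof.
move=> hp hq; apply/polyP => i.
rewrite coef_pD coefD !coefM.
have [_ ->] := Dsum (n := i.+1) (F := fun j => p`_j * q`_(i - j)%N) (fun j _ => SM (hp j) (hq (i - j)%N)).
rewrite -big_split /=; apply: eq_bigr => j _.
by rewrite (DM (hp j) (hq _)) !coef_pD; ring.
Qed.

Variables (a u : R).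

Definition Phi (p : {poly R}) := (pD p).[a] + (p^`()).[a] * u.

Lemma PhiD p q : over S p -> over S q -> Phi (p + q) = Phi p + Phi q.
Proof. by move=> hp hq; rewrite /Phi pDD // derivD !hornerD; ring. Qed.
Lemma PhiN p : over S p -> Phi (- p) = - Phi p.
Proof. by move=> hp; rewrite /Phi pDN // derivN !hornerN; ring. Qed.
Lemma PhiB p q : over S p -> over S q -> Phi (p - q) = Phi p - Phi q.
Proof. by move=> hp hq; rewrite PhiD ?PhiN //; exact: overN. Qed.
Lemma PhiM p q : over S p -> over S q -> Phi (p * q) = p.[a] * Phi q + q.[a] * Phi p.
Proof. by move=> hp hq; rewrite /Phi pDM // derivM !hornerD !hornerM; ring. Qed.
Lemma Phi0 : Phi 0 = 0.
Proof. by rewrite /Phi pD0 deriv0 !horner0; ring. Qed.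
Lemma PhiC c : S c -> Phi c%:P = D c.
Proof. by move=> hc; rewrite /Phi pDC // derivC !hornerC; ring. Qed.
Lemma PhiX : Phi 'X = u.
Proof. by rewrite /Phi pDX derivX horner0 hornerC; ring. Qed.

Definition ext : graphR := fun xy => exists p, over S p /\ xy = (p.[a], Phi p).

Hypothesis Hu : forall p, over S p -> p.[a] = 0 -> Phi p = 0.

Lemma ext_Pder : Pder ext.
Proof.
split.
- move=> x y z [p [hp [-> ->]]] [q [hq [hpq ->]]].
  apply/eqP; rewrite -subr_eq0 -PhiB //; apply/eqP; apply: Hu; first exact: overB.
  by rewrite hornerD hornerN hpq subrr.
- exists 1%:P; split; first by apply: overC; exact: S1.
  by rewrite hornerC (PhiC S1) D1.
- move=> x b y c [p [hp [-> ->]]] [q [hq [-> ->]]].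
  by exists (p + q); split; [exact: overD | rewrite hornerD PhiD].
- move=> x b [p [hp [-> ->]]].
  by exists (- p); split; [exact: overN | rewrite hornerN PhiN].
- move=> x b y c [p [hp [-> ->]]] [q [hq [-> ->]]].
  by exists (p * q); split; [exact: overM | rewrite hornerM PhiM].
Qed.

Lemma ext_sub : forall xy, G xy -> ext xy.
Proof.
move=> [x y] hxy; have hx : S x by exists y.
exists x%:P; split; first exact: overC.
by rewrite hornerC PhiC // (Dval hxy).
Qed.

Lemma ext_a : ext (a, u).
Proof. by exists 'X; split; [exact: overX | rewrite hornerX PhiX]. Qed.

End Der.



Section Alg.
Local Open Scope ring_scope.
Variable G : graphR.
Hypothesis HG : Pder G.
Local Notation S := (dom G).
Local Notation D := (Df G).

Lemma exists_u a : exists u, forall p, over S p -> p.[a] = 0 -> Phi G a u p = 0.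
Proof.
case: (pselect (exists p, over S p /\ p != 0 /\ p.[a] = 0)) => [ex|nex]; last first.
  exists 0 => p hp hpa.
  have -> : p = 0.
    by case: (eqVneq p 0) => // hp0; exfalso; apply: nex; exists p.
  exact: Phi0.
pose P n := `[< exists p, over S p /\ p != 0 /\ p.[a] = 0 /\ size p = n >].
have exP : exists n, P n.
  by case: ex => p [hp [p0 pa]]; exists (size p); apply/asboolP; exists p.
case: (ex_minnP exP) => n /asboolP [f [hf [f0 [fa sf]]]] minn.
have nomin : forall q, over S q -> q.[a] = 0 -> (size q < n)%N -> q = 0.
  move=> q hq qa sq; case: (eqVneq q 0) => // q0.
  have : (n <= size q)%N by apply: minn; apply/asboolP; exists q.
  by rewrite leqNgt sq.
set l := lead_coef f.
have l0 : l != 0 by rewrite lead_coef_eq0.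
have hl : S l by apply: hf.
have n2 : (2 <= n)%N.
  rewrite -sf ltnNge; apply/negP => s1.
  move: (size1_polyC s1) => ef.
  move: fa; rewrite ef hornerC => f00.
  by move: f0; rewrite ef f00 eqxx.
have d0 : f^`() != 0.
  apply/negP => /eqP d0.
  have := congr1 (fun p : {poly R} => p`_(n.-2)) d0.
  rewrite coef_deriv coef0.
  have -> : (n.-2).+1 = (size f).-1 by rewrite sf; lia.
  move=> /eqP; rewrite mulrn_eq0 -/(lead_coef f) -/l (negbTE l0) orbF.
  by rewrite sf => /eqP; lia.
have da : (f^`()).[a] != 0.
  apply/negP => /eqP da; move: d0; rewrite (nomin _ (over_deriv HG hf) da) ?eqxx //.
  by rewrite -sf; apply: lt_size_deriv.
exists (- (pD G f).[a] / (f^`()).[a]).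
set u := - (pD G f).[a] / (f^`()).[a].
have Phif : Phi G a u f = 0 by rewrite /Phi /u; field.
suff main : forall m (g : {poly R}), (size g <= m)%N -> over S g -> g.[a] = 0 -> Phi G a u g = 0.
  by move=> g; apply: main (leqnn _).
elim=> [|m IH] g sg hg ga.
  by move: sg; rewrite leqn0 size_poly_eq0 => /eqP ->; exact: Phi0.
case: (ltnP (size g) n) => gn.
  by rewrite (nomin g hg ga gn); exact: Phi0.
set c := lead_coef g.
have hc : S c by apply: hg.
set d := (size g - n)%N.
set h := l%:P * g - (c%:P * 'X^d) * f.
have hh : over S h.
  rewrite /h; apply: (overB HG); first exact (overM HG (overC HG hl) hg).
  exact (overM HG (overM HG (overC HG hc) (overXn HG d)) hf).
have ha : h.[a] = 0.
  by rewrite /h hornerD hornerN !hornerM ga fa; ring.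
have sh : (size h <= m)%N.
  apply/leq_sizeP => j hj.
  rewrite /h coefB coefCM -mulrA coefCM coefXnM.
  have -> : (j < d)%N = false by apply/negbTE; rewrite -leqNgt /d; lia.
  case: (ltngtP j (size g).-1) => hj2.
  - lia.
  - rewrite (nth_default 0 (_ : size g <= j)%N); last by lia.
    rewrite (nth_default 0 (_ : size f <= j - d)%N); last by rewrite sf /d; lia.
    by rewrite !mulr0 subrr.
  - have -> : (j - d)%N = (size f).-1 by rewrite sf /d; lia.
    by rewrite hj2 -/(lead_coef g) -/c -/(lead_coef f) -/l mulrC subrr.
have := IH h sh hh ha.
rewrite /h PhiB //; last first.
- exact (overM HG (overM HG (overC HG hc) (overXn HG d)) hf).
- exact (overM HG (overC HG hl) hg).
rewrite PhiM //; last exact (overC HG hl).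
rewrite PhiM //; last exact (overM HG (overC HG hc) (overXn HG d)).
rewrite ga fa Phif hornerC => e.
have : l * Phi G a u g = 0 by rewrite -e; ring.
by move=> /eqP; rewrite mulf_eq0 (negbTE l0) /= => /eqP.
Qed.

End Alg.



Section Zo.
Local Open Scope ring_scope.
Local Open Scope classical_set_scope.

Lemma zorn_ext (G0 : graphR) : Pder G0 ->
  exists G, Pder G /\ (forall xy, G0 xy -> G xy) /\ forall x, dom G x.
Proof.
move=> H0.
pose P := fun G : graphR => G = set0 \/ (Pder G /\ G0 `<=` G).
have chainP : forall F : set (set (R * R)), F `<=` P -> total_on F subset ->
    P (\bigcup_(X in F) X).
  move=> F FP Ftot.
  case: (pselect (exists X, F X /\ Pder X /\ G0 `<=` X)) => [[X0 [FX0 [PX0 G0X0]]]|nex].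
    right.
    have inP : forall xy, (\bigcup_(X in F) X) xy -> exists X, F X /\ X xy /\ Pder X.
      move=> xy [X FX Xxy]; exists X; split => //; split => //.
      case: (FP X FX) => [X0e|[]//].
      by move: Xxy; rewrite X0e.
    have two : forall xy1 xy2, (\bigcup_(X in F) X) xy1 -> (\bigcup_(X in F) X) xy2 ->
        exists X, F X /\ X xy1 /\ X xy2 /\ Pder X.
      move=> xy1 xy2 /inP [X1 [F1 [X1a P1]]] /inP [X2 [F2 [X2a P2]]].
      case: (Ftot _ _ F1 F2) => s.
        by exists X2; split => //; split => //; apply: s.
      by exists X1; split => //; split => //; split => //; apply: s.
    split; last by move=> xy /G0X0 h; exists X0.
    split.
    - move=> x y z h1 h2; have [X [_ [a1 [a2 PX]]]] := two _ _ h1 h2.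
      exact: (pd_fun PX a1 a2).
    - by exists X0 => //; apply: G0X0; exact: pd_one H0.
    - move=> x a y b h1 h2; have [X [FX [a1 [a2 PX]]]] := two _ _ h1 h2.
      by exists X => //; exact: (pd_add PX a1 a2).
    - move=> x a /inP [X [FX [a1 PX]]].
      by exists X => //; exact: (pd_opp PX a1).
    - move=> x a y b h1 h2; have [X [FX [a1 [a2 PX]]]] := two _ _ h1 h2.
      by exists X => //; exact: (pd_mul PX a1 a2).
  left; apply/seteqP; split => // xy [X FX Xxy].
  case: (FP X FX) => [X0e|[PX G0X]].
    by move: Xxy; rewrite X0e.
  by exfalso; apply: nex; exists X.
have [A [PA Amax]] := Zorn_bigcup chainP.
have G0ne : G0 (1, 0) by exact: pd_one H0.
case: PA => [A0|[PA G0A]].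
  exfalso; apply: (Amax G0); last by right; split.
  rewrite A0; split => //; move=> h; have := h _ G0ne; done.
exists A; split => //; split => //.
move=> x; apply: contrapT => nx.
have [u Hu] := exists_u PA x.
apply: (Amax (ext A x u)); last first.
  right; split; first exact: ext_Pder.
  by move=> xy /G0A; apply: ext_sub.
split; first by move=> xy; apply: ext_sub.
by move=> h; apply: nx; exists u; apply: h; apply: ext_a.
Qed.

End Zo.



Section Cnt.
Local Open Scope ring_scope.

Definition stepI (ab : R * R) (p : R) : R * R :=
  if p <= (ab.1 + ab.2) / 2 then ((ab.1 + 2 * ab.2) / 3, ab.2)
  else (ab.1, (2 * ab.1 + ab.2) / 3).

Lemma stepI_prop ab p : ab.1 < ab.2 ->
  let cd := stepI ab p in
  [/\ cd.1 < cd.2, ab.1 <= cd.1, cd.2 <= ab.2 & (p < cd.1 \/ cd.2 < p)].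
Proof.
case: ab => a b /= ab; rewrite /stepI /=.
case: ifP => hp /=.
  by split; [lra|lra|lra|left; lra].
move/negbT: hp; rewrite -ltNge => hp.
by split; [lra|lra|lra|right; lra].
Qed.

Lemma R_not_cnt (e : nat -> R) : exists x, forall n, e n <> x.
Proof.
pose I := fix I n := if n is n'.+1 then stepI (I n') (e n') else ((0 : R), (1 : R)).
have Ilt : forall n, (I n).1 < (I n).2.
  elim=> [|n IH] /=; first lra.
  by case: (stepI_prop (e n) IH).
have mon1 : forall n m, (n <= m)%N -> (I n).1 <= (I m).1.
  move=> n m /subnK <-; elim: (m - n)%N => [|k IH]; first by rewrite add0n.
  rewrite addSn /=; apply: le_trans IH _.
  by case: (stepI_prop (e (k + n)) (Ilt (k + n))).
have mon2 : forall n m, (n <= m)%N -> (I m).2 <= (I n).2.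
  move=> n m /subnK <-; elim: (m - n)%N => [|k IH]; first by rewrite add0n.
  rewrite addSn /=; apply: le_trans _ IH.
  by case: (stepI_prop (e (k + n)) (Ilt (k + n))).
have cross : forall n m, (I n).1 <= (I m).2.
  move=> n m; case: (leqP n m) => h.
    by apply: le_trans (mon1 _ _ h) _; apply: ltW.
  by apply: le_trans (ltW (Ilt n)) _; apply: mon2; apply: ltnW.
pose E := [set (I n).1 | n in [set: nat]]%classic.
have En : (E !=set0)%classic by exists (I 0).1; exists 0%N.
have Eub : forall m, (ubound E) (I m).2.
  by move=> m _ [n _ <-]; apply: cross.
have hs : has_sup E by split => //; exists (I 0).2; apply: Eub.
exists (sup E) => n en.
have h1 : (I n.+1).1 <= sup E by apply: sup_upper_bound => //; exists n.+1.
have h2 : sup E <= (I n.+1).2 by apply: ge_sup => //; apply: Eub.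
case: (stepI_prop (e n) (Ilt n)) => _ _ _; rewrite -/(I n.+1) en.
by case=> h; lra.
Qed.

Definition cnt (S : R -> Prop) := exists e : nat -> R, forall x, S x -> exists n, e n = x.
Definition adj (S : R -> Prop) (a : R) := fun x => exists p, over S p /\ x = p.[a].
Definition transc (S : R -> Prop) (x : R) := forall p, over S p -> p.[x] = 0 -> p = 0.

Lemma seq_idx (S : R -> Prop) (e : nat -> R) :
  (forall x, S x -> exists n, e n = x) ->
  forall s : seq R, (forall i, S (nth 0 s i)) -> exists ks, map e ks = s.
Proof.
move=> he; elim=> [|x s IH] hs; first by exists [::].
have [n en] := he _ (hs 0%N).
have [ks eks] := IH (fun i => hs i.+1).
by exists (n :: ks); rewrite /= en eks.
Qed.

Lemma poly_idx (S : R -> Prop) (e : nat -> R) :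
  (forall x, S x -> exists n, e n = x) ->
  forall p, over S p -> exists ks, Poly (map e ks) = p.
Proof.
move=> he p hp; have [ks eks] := seq_idx he (s := p) hp.
by exists ks; rewrite eks polyseqK.
Qed.

Lemma cnt_adj S a : cnt S -> cnt (adj S a).
Proof.
move=> [e he].
exists (fun n => if @unpickle (seq nat) n is Some ks then (Poly (map e ks)).[a] else 0).
move=> x [p [hp ->]].
have [ks eks] := poly_idx he hp.
by exists (pickle ks); rewrite pickleK eks.
Qed.

Lemma root_list (p : {poly R}) : p != 0 -> exists l : seq R, forall x, root p x -> x \in l.
Proof.
move: {2}(size p) (leqnn (size p)) => n; elim: n p => [|n IH] p sp p0.
  by move: p0; rewrite -size_poly_eq0; move: sp; rewrite leqn0 => /eqP ->.
case: (pselect (exists z, root p z)) => [[z pz]|nz]; last first.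
  by exists [::] => x px; exfalso; apply: nz; exists x.
have [q eq] := factor_theorem p z pz.
have q0 : q != 0 by apply: contraNneq p0 => q0; rewrite eq q0 mul0r.
have sq : (size q <= n)%N.
  move: sp; rewrite eq size_mul // ?size_XsubC; last by rewrite -size_poly_eq0 size_XsubC.
  by rewrite addn2 /=.
have [l hl] := IH q sq q0.
exists (z :: l) => x; rewrite eq rootM root_XsubC in_cons => /orP [/hl ->|->]; by rewrite ?orbT.
Qed.

Lemma exists_transc S : cnt S -> exists x, transc S x.
Proof.
move=> [e he].
pose rl (p : {poly R}) := epsilon (inhabits [::]) (fun l : seq R => forall x, root p x -> x \in l).
have rlP : forall p, p != 0 -> forall x, root p x -> x \in rl p.
  move=> p p0; apply: (epsilon_spec (inhabits [::]) (fun l : seq R => forall x, root p x -> x \in l)).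
  exact: root_list.
pose f n := if @unpickle (seq nat * nat)%type n is Some (ks, j) then nth 0 (rl (Poly (map e ks))) j else 0.
have [x hx] := R_not_cnt f.
exists x => p hp px.
case: (eqVneq p 0) => // p0; exfalso.
have [ks eks] := poly_idx he hp.
have xin : x \in rl p by apply: rlP => //; exact/rootP.
apply: (hx (pickle (ks, index x (rl p)))).
by rewrite /f pickleK eks nth_index.
Qed.

End Cnt.



Section Asm.
Local Open Scope ring_scope.

Definition Zset (x : R) := exists z : int, x = z%:~R.
Definition Zgraph : graphR := fun xy => exists z : int, xy = (z%:~R, 0).

Lemma Zgraph_Pder : Pder Zgraph.
Proof.
split.
- by move=> x y z [z1 [_ ->]] [z2 [_ ->]].
- by exists 1.
- move=> x a y b [z1 [-> ->]] [z2 [-> ->]]; exists (z1 + z2).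
  by rewrite intrD addr0.
- move=> x a [z1 [-> ->]]; exists (- z1).
  by rewrite intrN oppr0.
- move=> x a y b [z1 [-> ->]] [z2 [-> ->]]; exists (z1 * z2).
  by rewrite intrM !mulr0 addr0.
Qed.

Lemma dom_Zgraph x : dom Zgraph x <-> Zset x.
Proof.
split; first by move=> [y [z [-> _]]]; exists z.
by move=> [z ->]; exists 0; exists z.
Qed.

Lemma cnt_Zset : cnt Zset.
Proof.
exists (fun n => if @unpickle int n is Some z then z%:~R else 0).
by move=> x [z ->]; exists (pickle z); rewrite pickleK.
Qed.

Definition tsel (S : R -> Prop) : R := epsilon (inhabits 0) (transc S).
Fixpoint Sd (l : nat) : R -> Prop :=
  if l is l'.+1 then adj (Sd l') (tsel (Sd l')) else Zset.
Definition tt l := tsel (Sd l).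

Lemma Sd_prop l : cnt (Sd l) /\ transc (Sd l) (tt l).
Proof.
have h : forall l, cnt (Sd l).
  elim=> [|n IH]; first exact: cnt_Zset.
  exact: cnt_adj.
split; first exact: h.
apply: (epsilon_spec (inhabits 0) (transc (Sd l))).
exact: exists_transc.
Qed.

Definition uu (j l : nat) : R := if l == j then - tt l else 0.

Fixpoint Gs (j l : nat) : graphR :=
  if l is l'.+1 then ext (Gs j l') (tt l') (uu j l') else Zgraph.

Lemma over_equiv (S1 S2 : R -> Prop) p : (forall x, S1 x <-> S2 x) -> over S1 p -> over S2 p.
Proof. by move=> e h i; apply/e. Qed.

Lemma Gs_prop j l : Pder (Gs j l) /\ (forall x, dom (Gs j l) x <-> Sd l x).
Proof.
elim: l => [|l [P1 E1]]; first by split; [exact: Zgraph_Pder | exact: dom_Zgraph].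
have Hu : forall p, over (dom (Gs j l)) p -> p.[tt l] = 0 -> Phi (Gs j l) (tt l) (uu j l) p = 0.
  move=> p hp pa.
  have [_ tr] := Sd_prop l.
  rewrite (tr p (over_equiv E1 hp) pa); exact: Phi0.
split; first exact: ext_Pder.
move=> x; split.
  move=> [y [p [hp [ex _]]]]; exists p; split; first exact: over_equiv E1 hp.
  by rewrite ex.
move=> [p [hp ->]]; exists (Phi (Gs j l) (tt l) (uu j l) p); exists p; split => //.
by apply: over_equiv hp => z; split => /E1.
Qed.

Lemma Gs_mono j l l' : (l <= l')%N -> forall xy, Gs j l xy -> Gs j l' xy.
Proof.
move=> /subnK <-; elim: (l' - l)%N => [|k IH] xy h; first by rewrite add0n.
rewrite addSn /=; apply: (ext_sub (Gs_prop j (k + l)).1); exact: IH.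
Qed.

Lemma tt_neq0 l : tt l != 0.
Proof.
have [P0 E0] := Gs_prop 0 l.
have [_ tr] := Sd_prop l.
apply/negP => /eqP t0.
have := tr 'X (over_equiv E0 (overX P0)).
rewrite hornerX t0 => /(_ erefl) /eqP.
by rewrite polyX_eq0.
Qed.

Lemma der_exists (m j : nat) : exists D : R -> R,
  [/\ forall x y, D (x + y) = D x + D y,
      forall x y, D (x * y) = x * D y + y * D x &
      forall l, (l < m)%N -> D (tt l) = uu j l].
Proof.
have [Pm _] := Gs_prop j m.
have [G [PG [sub tot]]] := zorn_ext Pm.
have GD : forall x, G (x, Df G x) by move=> x; apply: DfP; exact: tot.
exists (Df G); split.
- move=> x y; apply: (pd_fun PG (GD _)); exact: (pd_add PG (GD x) (GD y)).
- move=> x y; apply: (pd_fun PG (GD _)); exact: (pd_mul PG (GD x) (GD y)).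
- move=> l lm; apply: (pd_fun PG (GD _)); apply: sub.
  apply: (Gs_mono (l := l.+1)) => //.
  have [Pl _] := Gs_prop j l.
  exact: ext_a.
Qed.

End Asm.



Section Fin.
Local Open Scope ring_scope.

Definition negv (v : nat -> R) (i : nat) := (forall j, (j < i)%N -> v j = 0) /\ v i < 0.

Lemma negv_comb (v w : nat -> R) (al be : R) i : 0 < al -> 0 < be ->
  negv v i -> negv w i -> negv (fun j => al * v j + be * w j) i.
Proof.
move=> a0 b0 [v1 v2] [w1 w2]; split.
  by move=> j ji; rewrite v1 ?w1 // !mulr0 addr0.
have : 0 < al * - v i + be * - w i.
  by apply: addr_gt0; apply: mulr_gt0 => //; rewrite oppr_gt0.
lra.
Qed.

Lemma lex_comb M (v w : nat -> R) (al be : R) : 0 < al -> 0 < be ->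
  (forall j, (j < M)%N -> ~ negv v j) -> (forall j, (j < M)%N -> ~ negv w j) ->
  forall j, (j < M)%N -> ~ negv (fun i => al * v i + be * w i) j.
Proof.
move=> a0 b0 hv hw j jM [c1 c2].
have pre : forall i, (i <= j)%N -> forall i', (i' < i)%N -> v i' = 0 /\ w i' = 0.
  elim=> [|i IH] ij i' //.
  rewrite ltnS leq_eqVlt => /orP [/eqP ->|]; last first.
    by apply: IH; apply: ltnW.
  have IH' := IH (ltnW ij).
  have vi : 0 <= v i.
    rewrite leNgt; apply/negP => vi; apply: (hv i); first by lia.
    by split => // i0 /IH' [].
  have wi : 0 <= w i.
    rewrite leNgt; apply/negP => wi; apply: (hw i); first by lia.
    by split => // i0 /IH' [].
  have s0 := c1 i ij.
  have h1 : 0 <= al * v i by apply: mulr_ge0 => //; apply: ltW.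
  have h2 : 0 <= be * w i by apply: mulr_ge0 => //; apply: ltW.
  have e1 : al * v i = 0 by lra.
  have e2 : be * w i = 0 by lra.
  move: e1 e2 => /eqP; rewrite mulf_eq0 gt_eqF //= => /eqP ->.
  by move=> /eqP; rewrite mulf_eq0 gt_eqF //= => /eqP ->.
have vj : 0 <= v j.
  rewrite leNgt; apply/negP => vj; apply: (hv j jM).
  by split => // i0 /(pre j (leqnn j)) [].
have wj : 0 <= w j.
  rewrite leNgt; apply/negP => wj; apply: (hw j jM).
  by split => // i0 /(pre j (leqnn j)) [].
have h1 : 0 <= al * v j by apply: mulr_ge0 => //; apply: ltW.
have h2 : 0 <= be * w j by apply: mulr_ge0 => //; apply: ltW.
lra.
Qed.

End Fin.

Local Open Scope ring_scope.
Theorem theorem1p1 : forall k : nat, Peano.le 1 k ->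
  exists A : nat -> R -> Prop, semiring_partition_of_pos k A.
Proof.
move=> k /ssrnat.leP k1.
set m := k.-1.
pose P (j : nat) (D : R -> R) := [/\ forall x y, D (x + y) = D x + D y,
      forall x y, D (x * y) = x * D y + y * D x &
      forall l, (l < m)%N -> D (tt l) = uu j l].
pose Dv (j : nat) := epsilon (inhabits (fun x : R => x)) (P j).
have DvP : forall j, P j (Dv j).
  by move=> j; apply: (epsilon_spec (inhabits (fun x : R => x)) (P j)); exact: der_exists.
have DvD : forall j x y, Dv j (x + y) = Dv j x + Dv j y by move=> j; case: (DvP j).
have DvM : forall j x y, Dv j (x * y) = x * Dv j y + y * Dv j x by move=> j; case: (DvP j).
have Dvt : forall j l, (l < m)%N -> Dv j (tt l) = uu j l by move=> j; case: (DvP j).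
pose vec (x : R) := fun j => Dv j x.
exists (fun i x => Rlt 0 x /\ (((i < m)%N /\ negv (vec x) i) \/
                     (i = m /\ forall j, (j < m)%N -> ~ negv (vec x) j))).
split; [|split; [|split]].
-
  move=> i /ssrnat.ltP ik.
  case: (ltnP i m) => im.
    exists (tt i * tt i); split.
      apply/RltP; rewrite lt0r mulf_eq0 orbb tt_neq0 /=.
      by rewrite -expr2 sqr_ge0.
    left; split => //; split.
      move=> j ji; rewrite /vec DvM Dvt // /uu.
      have -> : (i == j) = false by apply/negbTE; rewrite neq_ltn ji orbT.
      by rewrite !mulr0 addr0.
    rewrite /vec DvM Dvt // /uu eqxx.
    have t0 := tt_neq0 i.
    have : 0 < tt i * tt i by rewrite lt0r mulf_eq0 orbb t0 /= -expr2 sqr_ge0.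
    lra.
  exists 1; split; first by apply/RltP; exact: ltr01.
  right; split; first by rewrite /m; lia.
  move=> j jm [_].
  have D1 : Dv j 1 = 0.
    have := DvM j 1 1; rewrite !mul1r => e.
    lra.
  by rewrite /vec D1 ltxx.
-
  move=> i j x /ssrnat.ltP ik /ssrnat.ltP jk [_ hi] [_ hj].
  have neq_lt : forall a b, (a < b)%N -> negv (vec x) a -> negv (vec x) b -> False.
    move=> a b ab [_ na] [nb _]; move: na; rewrite nb // ltxx //.
  case: hi => [[im ni]|[-> ni]]; case: hj => [[jm nj]|[-> nj]] //.
  + case: (ltngtP i j) => // ij; first by exfalso; exact: neq_lt ij ni nj.
    by exfalso; exact: neq_lt ij nj ni.
  + by exfalso; apply: (nj i).
  + by exfalso; apply: (ni j).
-
  move=> x; split.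
    move=> /RltP x0.
    case: (pselect (exists j, (j < m)%N /\ negv (vec x) j)) => [[j [jm nj]]|nn].
      exists j; split; first by apply/ssrnat.ltP; rewrite /m in jm; lia.
      by split; [apply/RltP | left].
    exists m; split; first by apply/ssrnat.ltP; rewrite /m; lia.
    split; first exact/RltP.
    by right; split => // j jm nj; apply: nn; exists j.
  by move=> [i [_ [h _]]].
-
  move=> i /ssrnat.ltP ik x y [/RltP x0 hx] [/RltP y0 hy].
  have sum_e : vec (x + y) = (fun j => 1 * vec x j + 1 * vec y j).
    by apply: funext => j; rewrite /vec DvD !mul1r.
  have prod_e : vec (x * y) = (fun j => y * vec x j + x * vec y j).
    by apply: funext => j; rewrite /vec DvM addrC.
  split; split.
  + apply/RltP; exact: addr_gt0.
  + change (x + y)%R with (Rplus x y).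
    rewrite sum_e.
    case: hx => [[im nx]|[ei nx]]; case: hy => [[im2 ny]|[ei2 ny]].
    * by left; split => //; apply: negv_comb.
    * by move: im; rewrite ei2 ltnn.
    * by move: im2; rewrite ei ltnn.
    * right; split => //; exact: lex_comb.
  + apply/RltP; exact: mulr_gt0.
  + change (x * y)%R with (Rmult x y).
    rewrite prod_e.
    case: hx => [[im nx]|[ei nx]]; case: hy => [[im2 ny]|[ei2 ny]].
    * by left; split => //; apply: negv_comb.
    * by move: im; rewrite ei2 ltnn.
    * by move: im2; rewrite ei ltnn.
    * right; split => //; exact: lex_comb.
Qed.
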